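(* Let $I_1,\dots,I_m,I$ be pairwise different nonempty subsets of $\{1,\dots,n\}$, let $\mathcal{A}'=\{H_{I_1},\dots,H_{I_m}\}$ and let $\mathcal{A}''_I=\{H\cap H_I: H\in\mathcal{A}'\}$ (the restriction of $\mathcal{A}'\cup\{H_I\}$ to $H_I$). Then $|\mathcal{A}'|-|\mathcal{A}''_I|$ equals the number of circuit-triples $\{I,A,B\}$ with $A,B\in\{I_1,\dots,I_m\}$.
   Context: $H_J=\ker\big(\sum_{j\in J}x_j\big)\subseteq\mathbb{Q}^n$ for $J\subseteq\{1,\dots,n\}$. A circuit-triple is a set $\{A_1,A_2,A_3\}$ of three pairwise different nonempty subsets such that one of them is the disjoint union of the other two (equivalently, their three linear forms $\sum_{i\in A_j}x_i$ span a $2$-dimensional space). *)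

(* Defs.v *)
From HB Require Import structures.
From mathcomp Require Import all_boot all_order all_algebra.
Set Implicit Arguments. Unset Strict Implicit. Unset Printing Implicit Defensive.
Import GRing.Theory.
Local Open Scope ring_scope.

(* column vector of the linear form sum_{j in J} x_j *)
Definition indic (n : nat) (J : {set 'I_n}) : 'cV[rat]_n :=
  \col_i (if i \in J then 1 else 0).

Definition hyp (n : nat) (J : {set 'I_n}) : {vspace 'rV[rat]_n} :=
  lker (linfun (fun x : 'rV[rat]_n => x *m indic J)).

Definition circuit_triple (n : nat) (T : {set {set 'I_n}}) : bool :=
  [&& #|T| == 3, set0 \notin T &
      [exists A in T, exists B in T, exists C in T,
        [&& A != B, A :&: B == set0 & C == A :|: B]]].

(* Main.v *)
Require Import Defs.
From HB Require Import structures.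
From mathcomp Require Import all_boot all_order all_algebra.
Local Open Scope ring_scope.
Import GRing.Theory.
Set Implicit Arguments. Unset Strict Implicit.

Definition dU n (P Q R : {set 'I_n}) := (P :&: Q == set0) && (R == P :|: Q).
Definition tri n (X Y Z : {set 'I_n}) := [|| dU X Y Z, dU X Z Y | dU Y Z X].

Lemma dUP n (P Q R : {set 'I_n}) : dU P Q R ->
  forall x, ((x \in P) && (x \in Q) = false) /\ ((x \in R) = (x \in P) || (x \in Q)).
Proof. by case/andP=> /eqP H1 /eqP H2 x; rewrite -in_setI H1 in_set0 H2 in_setU. Qed.

Lemma dUC n (P Q R : {set 'I_n}) : dU P Q R = dU Q P R.
Proof. by rewrite /dU setIC setUC. Qed.

Lemma neq_wit n (X Y : {set 'I_n}) : X != Y -> exists x, (x \in X) != (x \in Y).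
Proof.
move=> H; apply/existsP; apply: contraR H; rewrite negb_exists => /forallP H.
by apply/eqP/setP=> x; move: (H x); rewrite negbK => /eqP.
Qed.

Lemma ne0_wit n (X : {set 'I_n}) : X != set0 -> exists x, x \in X.
Proof. by case/set0Pn => x; exists x. Qed.

Ltac inst x := repeat match goal with H : forall y : ?T, _ |- _ => have := H x; clear H end.
Ltac revb := repeat match goal with H : is_true _ |- _ => revert H end.
Ltac bools := repeat match goal with |- context [?a \in ?S] => case: (a \in S) end.
Ltac fin := intros; repeat (match goal with H : _ /\ _ |- _ => destruct H end); simpl in *; try discriminate; done.
Ltac bf x := inst x; revb; bools; fin.

Lemma tri_uniq n (I A B C : {set 'I_n}) : I != set0 -> A != set0 -> I != A ->
  tri I A B -> tri I A C -> B = C.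
Proof.
move=> /ne0_wit [wI HwI] /ne0_wit [wA HwA] /neq_wit [d Hd].
case/or3P => /dUP H1; case/or3P => /dUP H2;
  first [ apply/setP => x; bf x | exfalso; bf wI | exfalso; bf wA | exfalso; bf d ].
Qed.

Lemma CT n (X Y Z : {set 'I_n}) : X != set0 -> Y != set0 -> Z != set0 ->
  X != Y -> X != Z -> Y != Z -> circuit_triple [set X; Y; Z] = tri X Y Z.
Proof.
move=> nX nY nZ XY XZ YZ.
rewrite /circuit_triple setUC cardsU1 cards2 XY !inE !negb_or ![Z == _]eq_sym XZ YZ /=.
rewrite ![set0 == _]eq_sym nX nY nZ /=.
apply/idP/idP.
- case/existsP => A /andP [HA /existsP [B /andP [HB /existsP [C /andP [HC /and3P [AB ABe CE]]]]]].
  have hd : dU A B C by rewrite /dU ABe CE.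
  have hd' : dU B A C by rewrite dUC.
  have [wX HwX] := ne0_wit nX. have [wY HwY] := ne0_wit nY. have [wZ HwZ] := ne0_wit nZ.
  clear ABe CE.
  move: HA HB HC AB hd hd'; rewrite !inE => /or3P [] /eqP -> /or3P [] /eqP -> /or3P [] /eqP -> AB hd hd';
  rewrite ?eqxx // in AB;
  first [ by rewrite /tri ?hd ?hd' ?orbT
        | exfalso; move/dUP: hd => H; first [bf wX | bf wY | bf wZ] ].
- have mem : forall W, W \in [set X; Y; Z] -> W \in Z |: [set X; Y].
    by move=> W; rewrite setUC.
  case/or3P => /andP [H1 H2].
  + apply/existsP; exists X; apply/andP; split; first by apply: mem; rewrite !inE eqxx.
    apply/existsP; exists Y; apply/andP; split; first by apply: mem; rewrite !inE eqxx ?orbT.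
    apply/existsP; exists Z; apply/andP; split; first by apply: mem; rewrite !inE eqxx ?orbT.
    by rewrite XY H1 H2.
  + apply/existsP; exists X; apply/andP; split; first by apply: mem; rewrite !inE eqxx.
    apply/existsP; exists Z; apply/andP; split; first by apply: mem; rewrite !inE eqxx ?orbT.
    apply/existsP; exists Y; apply/andP; split; first by apply: mem; rewrite !inE eqxx ?orbT.
    by rewrite XZ H1 H2.
  + apply/existsP; exists Y; apply/andP; split; first by apply: mem; rewrite !inE eqxx ?orbT.
    apply/existsP; exists Z; apply/andP; split; first by apply: mem; rewrite !inE eqxx ?orbT.
    apply/existsP; exists X; apply/andP; split; first by apply: mem; rewrite !inE eqxx ?orbT.
    by rewrite YZ H1 H2.
Qed.

Definition val n (J : {set 'I_n}) (x : 'rV[rat]_n) := (x *m indic J) ord0 ord0.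
Definition ev n (u : 'I_n) : 'rV[rat]_n := delta_mx ord0 u.

Lemma memhyp n (J : {set 'I_n}) (x : 'rV[rat]_n) : (x \in hyp J) = (val J x == 0).
Proof.
rewrite /hyp /val memv_ker (lfunE (mulmxr (indic J))) /=.
apply/eqP/eqP => [->|H]; first by rewrite mxE.
by rewrite [x *m _]mx11_scalar H raddf0.
Qed.

Lemma valD n (J : {set 'I_n}) x y : val J (x + y) = val J x + val J y.
Proof. by rewrite /val mulmxDl mxE. Qed.
Lemma valB n (J : {set 'I_n}) x y : val J (x - y) = val J x - val J y.
Proof. by rewrite /val mulmxBl !mxE. Qed.
Lemma valN n (J : {set 'I_n}) x : val J (- x) = - val J x.
Proof. by rewrite /val mulNmx !mxE. Qed.
Lemma val_e n (J : {set 'I_n}) u : val J (ev u) = if u \in J then 1 else 0.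
Proof. by rewrite /val /ev -rowE !mxE. Qed.

Lemma hypcapP n (A I : {set 'I_n}) x :
  (x \in (hyp A :&: hyp I)%VS) = (val A x == 0) && (val I x == 0).
Proof. by rewrite memv_cap !memhyp. Qed.

Lemma hyp_inj n (A B : {set 'I_n}) : hyp A = hyp B -> A = B.
Proof.
move=> E; apply/setP => u; have := memhyp A (ev u); rewrite E memhyp !val_e.
by case: (u \in A); case: (u \in B).
Qed.

Lemma val_dU n (P Q R : {set 'I_n}) x : dU P Q R -> val R x = val P x + val Q x.
Proof.
move=> /dUP H; rewrite /val; suff -> : indic R = indic P + indic Q by rewrite mulmxDr mxE.
apply/matrixP => i j; rewrite !mxE; case: (H i).
by case: (i \in P); case: (i \in Q); case: (i \in R).
Qed.

Lemma M2l n (I A B : {set 'I_n}) : tri I A B -> (hyp A :&: hyp I = hyp B :&: hyp I)%VS.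
Proof.
move=> H; apply/vspaceP => x; rewrite !hypcapP.
case/or3P: H => /(val_dU x) ->;
  try (case: (eqVneq (val I x) 0) => [->|]; rewrite ?add0r ?addr0 ?andbF ?andbT //; fail).
case: (eqVneq (val A x) 0) => [->|HA]; rewrite ?add0r /=; first by rewrite andbb.
by case: (eqVneq (val B x) 0) => [->|//]; rewrite addr0 (negbTE HA).
Qed.

Lemma M2r n (I A B : {set 'I_n}) : A != B ->
  (forall x, ((val A x == 0) && (val I x == 0)) = ((val B x == 0) && (val I x == 0))) ->
  tri I A B.
Proof.
move=> nAB E.
have AB : (forall u, (u \in A) = (u \in B)) -> False.
  by move=> H; move/negP: nAB; apply; apply/eqP/setP.
have F1 : forall u, u \notin I -> (u \in A) = (u \in B).
  move=> u Hu; move: (E (ev u)); rewrite !val_e (negbTE Hu).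
  by case: (u \in A); case: (u \in B).
have F2 : forall u v, u \in I -> v \in I ->
    ((u \in A) == (v \in A)) = ((u \in B) == (v \in B)).
  move=> u v Hu Hv; move: (E (ev u - ev v)); rewrite !valB !val_e Hu Hv.
  by case: (u \in A); case: (v \in A); case: (u \in B); case: (v \in B).
have F3 : forall u v w, u \notin I -> u \in A -> v \in I -> v \in A -> v \notin B ->
    w \in I -> w \notin A -> w \in B -> False.
  move=> u v w Hu HuA Hv HvA HvB Hw HwA HwB.
  move: (E (ev u - ev v + ev w)); rewrite !valD !valN !val_e -(F1 u Hu).
  by rewrite (negbTE Hu) HuA Hv HvA (negbTE HvB) Hw (negbTE HwA) HwB.
case: (boolP [exists v, (v \in I) && (v \in A)]) => [/existsP [v /andP [vI vA]] |];
  last first.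
  rewrite negb_exists => /forallP nv.
  apply/or3P; apply: Or31; apply/andP; split.
    by apply/eqP/setP => x; rewrite in_setI in_set0; exact: negbTE (nv x).
  apply/eqP/setP => u; rewrite in_setU; case: (boolP (u \in I)) => uI /=; last by rewrite F1.
  apply/negP => uB; apply: AB => x; case: (boolP (x \in I)) => xI; last exact: F1.
  have := F2 u x uI xI; have nuA := nv u; have nxA := nv x.
  rewrite uI /= in nuA; rewrite xI /= in nxA.
  by rewrite (negbTE nuA) (negbTE nxA) (negbTE (introN idP uB)); case: (x \in B).
case: (boolP [exists w, (w \in I) && (w \notin A)]) => [/existsP [w /andP [wI wA]] |];
  last first.
  rewrite negb_exists => /forallP nw.
  have IA : forall u, u \in I -> u \in A.
    by move=> u uI; move: (nw u); rewrite uI /= negbK.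
  apply/or3P; apply: Or32; apply/andP; split.
    apply/eqP/setP => x; rewrite in_setI in_set0; apply/negP => /andP [xI xB].
    apply: AB => y; case: (boolP (y \in I)) => yI; last exact: F1.
    have := F2 x y xI yI; rewrite (IA x xI) (IA y yI) xB.
    by case: (y \in B).
  apply/eqP/setP => u; rewrite in_setU; case: (boolP (u \in I)) => uI /=; last exact: F1.
  exact: IA.
have vw := F2 v w vI wI; rewrite vA (negbTE wA) in vw.
have vB : v \notin B.
  apply/negP => vB; apply: AB => y; case: (boolP (y \in I)) => yI; last exact: F1.
  have := F2 y v yI vI; rewrite vA vB.
  by case: (y \in A); case: (y \in B).
have wB : w \in B by move: vw; rewrite (negbTE vB); case: (w \in B).
have key : forall u, u \in I -> (u \in A) = ~~ (u \in B).
  move=> u uI; have := F2 u v uI vI; rewrite vA (negbTE vB).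
  by case: (u \in A); case: (u \in B).
have out : forall u, u \notin I -> u \notin A.
  by move=> u uI; apply/negP => uA; exact: (F3 u v w uI uA vI vA vB wI wA wB).
apply/or3P; apply: Or33; apply/andP; split.
  apply/eqP/setP => x; rewrite in_setI in_set0.
  case: (boolP (x \in I)) => xI; first by rewrite key //; case: (x \in B).
  by rewrite (negbTE (out x xI)).
apply/eqP/setP => x; rewrite in_setU.
case: (boolP (x \in I)) => xI; first by rewrite key //; case: (x \in B).
by rewrite -(F1 x xI) (negbTE (out x xI)).
Qed.

Lemma size_undup_pick (T : finType) (U : eqType) (f : T -> U) :
  size (undup (map f (enum T))) = #|[set x | [pick y | f y == f x] == Some x]|.
Proof.
set R := [set x | _].
have injR : {in enum R &, injective f}.
  move=> x y; rewrite !mem_enum !inE => /eqP Hx /eqP Hy Exy.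
  by move: Hx; rewrite Exy Hy => -[].
rewrite cardE -(size_map f).
apply: perm_size; apply: uniq_perm; first exact: undup_uniq.
  by rewrite map_inj_in_uniq ?enum_uniq.
move=> u; rewrite mem_undup; apply/mapP/mapP => [[x _ ->]|[x _ ->]]; last first.
  by exists x; rewrite ?mem_enum.
case E : [pick z | f z == f x] => [y|]; last first.
  by move: E; case: pickP => // H; have := H x; rewrite eqxx.
have Hy : f y == f x by move: E; case: pickP => // z Hz [<-].
exists y; last by rewrite (eqP Hy).
by rewrite mem_enum inE (eqP Hy) E.
Qed.

Lemma count_gen n m (Is : 'I_m -> {set 'I_n}) (I : {set 'I_n}) (U : eqType) (f : 'I_m -> U) :
  injective Is -> (forall j, Is j != set0) -> I != set0 -> (forall j, Is j != I) ->
  (forall j k, j != k -> (f j == f k) = tri I (Is j) (Is k)) ->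
  (m - #|[set x | [pick y | f y == f x] == Some x]|)%N
  = #|[set T : {set {set 'I_n}} |
        [&& circuit_triple T, I \in T & T \subset I |: [set Is j | j : 'I_m]]]|.
Proof.
move=> Iinj Ine Ine0 IsnI Hf.
set R := [set x | _].
set S := [set T | _].
pose rep j := odflt j [pick k | f k == f j].
have rep_eq : forall j, f (rep j) = f j.
  intro a; rewrite /rep; case: pickP => [y Hy|H0] /=; [exact/eqP | by have := H0 a; rewrite eqxx].
have rep_pick : forall j, [pick k | f k == f j] = Some (rep j).
  move=> j; rewrite /rep; case E : [pick k | f k == f j] => [y|] //=.
  by move: E; case: pickP => // H0; have := H0 j; rewrite eqxx.
have rep_f : forall a b, f a = f b -> rep a = rep b.
  by move=> a b E; have := rep_pick a; rewrite E rep_pick => -[->].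
have rep_rep : forall j, rep (rep j) = rep j by move=> j; apply: rep_f.
have HR : forall j, (j \in R) = (rep j == j).
  by move=> j; rewrite inE rep_pick.
pose D := [set j | rep j != j].
have -> : (m - #|R| = #|D|)%N.
  rewrite -[m in (m - _)%N](card_ord m) -(cardsC R) addKn.
  by apply: eq_card => j; rewrite in_setC HR inE.
pose g j := [set I; Is j; Is (rep j)].
have IsIs : forall j k, (Is j == Is k) = (j == k).
  by move=> j k; apply/eqP/eqP => [/Iinj|->].
have ginj : {in D &, injective g}.
  move=> j k; rewrite !inE => Dj Dk E.
  have : Is k \in g j by rewrite E !inE eqxx !orbT.
  rewrite !inE (negbTE (IsnI k)) IsIs /= => /orP [/eqP -> // | ].
  rewrite IsIs => /eqP kE.
  by move: Dk; rewrite kE rep_rep eqxx.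
have -> : S = g @: D.
  apply/setP => T; rewrite inE; apply/idP/idP.
  - case/and3P => CT3 IT TS.
    have c3 : #|T| == 3%N by case/and3P: CT3.
    have : #|T :\ I| == 2%N by move: c3; rewrite (cardsD1 I T) IT.
    case/cards2P => X [Y [XY TE]].
    have TE' : T = [set I; X; Y].
      by rewrite -(setD1K IT) TE setUA.
    have inIs : forall W, W \in T -> W != I -> exists a, W = Is a.
      move=> W WT WI; move/subsetP: TS => /(_ W WT); rewrite !inE (negbTE WI) /=.
      by case/imsetP => a _ ->; exists a.
    have XT : X \in T by rewrite TE' !inE eqxx ?orbT.
    have YT : Y \in T by rewrite TE' !inE eqxx ?orbT.
    have XD : X \in T :\ I by rewrite TE !inE eqxx.
    have YD : Y \in T :\ I by rewrite TE !inE eqxx orbT.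
    move: XD YD; rewrite !in_setD1 => /andP [XI XT'] /andP [YI YT'].
    have [a Xa] := inIs X XT' XI. have [b Yb] := inIs Y YT' YI.
    subst X Y.
    have ab : a != b by apply: contra XY => /eqP ->.
    have Ia : forall c, I != Is c by move=> c; rewrite eq_sym.
    have tab : tri I (Is a) (Is b).
      by rewrite -CT ?Ine ?IsIs // -TE'.
    have fab : f a = f b by apply/eqP; rewrite Hf.
    have rab := rep_f a b fab.
    apply/imsetP.
    case: (eqVneq (rep a) a) => ra.
      exists b; first by rewrite /D inE -rab ra.
      by rewrite TE' /g -rab ra -!setUA [[set Is a] :|: _]setUC.
    case: (eqVneq (rep a) b) => rb.
      by exists a; [rewrite /D inE ra | rewrite TE' /g rb].
    exfalso.
    have tar : tri I (Is a) (Is (rep a)).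
      by rewrite -Hf 1?eq_sym // rep_eq.
    have := tri_uniq Ine0 (Ine a) (Ia a) tab tar.
    by move/Iinj => E; move: rb; rewrite E eqxx.
  - case/imsetP => j; rewrite inE => Dj ->.
    have jr : j != rep j by rewrite eq_sym.
    rewrite /g CT ?Ine // ?IsIs 1?eq_sym ?IsnI //.
    + rewrite -Hf // rep_eq eqxx /=.
      rewrite !inE eqxx /=; apply/subsetP => W; rewrite !inE => /orP [/orP [] |] /eqP ->;
        rewrite ?eqxx //= ?imset_f ?orbT //.
by rewrite card_in_imset.
Qed.

Unset Implicit Arguments.
Theorem lemma2p9 (n m : nat) (Is : 'I_m -> {set 'I_n}) (I : {set 'I_n}) :
  injective Is ->
  (forall j, Is j != set0) ->
  I != set0 ->
  (forall j, Is j != I) ->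
  (size (undup [seq hyp (Is j) | j <- enum 'I_m])
    - size (undup [seq (hyp (Is j) :&: hyp I)%VS | j <- enum 'I_m]))%N
  = #|[set T : {set {set 'I_n}} |
        [&& circuit_triple T, I \in T & T \subset I |: [set Is j | j : 'I_m]]]|.
Proof.
move=> Iinj Ine Ine0 IsnI.
have -> : size (undup [seq hyp (Is j) | j <- enum 'I_m]) = m.
  rewrite undup_id; first by rewrite size_map size_enum_ord.
  by rewrite map_inj_uniq ?enum_uniq // => j k /hyp_inj /Iinj.
rewrite (size_undup_pick (fun j => (hyp (Is j) :&: hyp I)%VS)).
apply: count_gen => // j k jk.
apply/eqP/idP => [E|]; last by move/M2l.
apply: M2r; first by apply: contra jk => /eqP /Iinj ->.
by move=> x; rewrite -!hypcapP E.
Qed.
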